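(* Let $R$ be a commutative ring, $\delta\in R$, $n\geq 0$. (1) If $x\in X\subseteq\{1,\dots,n\}$ and $n\geq 2$, then $\mathbb 1\otimes_{\mathcal P_n}\mathcal A_{X,x}=0$. (2) If $x\in X\subseteq\{1,\dots,n\}$, then $\mathbb 1\otimes_{\mathcal P_n}\mathcal B_{X,x}=0$. (3) If $Y\subseteq X\subseteq\{1,\dots,n\}$ with $|Y|\geq 2$, then $\mathbb 1\otimes_{\mathcal P_n}\mathcal M_{X,Y}=0$, and $\mathcal M_{X,Y}$ is a direct summand of the left $\mathcal P_n$-module $\mathcal P_n/J_{X-Y}$.
   Context: $\mathcal P_n=\mathcal P_n(R,\delta)$ is the partition algebra: the free $R$-module on set partitions (''diagrams'') of $\{-n,\dots,-1,1,\dots,n\}$ (negative = left nodes, positive = right nodes), with product given by stacking (identifying right nodes of the first diagram with left nodes of the second), taking the induced partition on outer nodes, and multiplying by $\delta$ for each component consisting only of middle nodes. The trivial right module $\mathbb 1$ is $R$ with permutation diagrams (all blocks of the form $\{-i,j\}$) acting as the identity and other diagrams as $0$. For $Z\subseteq\{1,\dots,n\}$, $J_Z$ is the left ideal spanned by diagrams in which among the right nodes labelled by $Z$ there is a singleton block or two distinct nodes in the same block. For $Y\subseteq X\subseteq\{1,\dots,n\}$ and $x\in X$, define left submodules of $\mathcal P_n$: $A_x$ spanned by diagrams in which the right node $x$ is a singleton; $B_{X,x}$ spanned by diagrams in which $x$ lies in the same block as some other element of $X$; $M_Y$ spanned by diagrams in which all right nodes in $Y$ lie in one block. Set $\mathcal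 A_{X,x}=A_x/(A_x\cap J_{X-\{x\}})$, $\mathcal B_{X,x}=B_{X,x}/(B_{X,x}\cap J_{X-\{x\}})$, $\mathcal M_{X,Y}=M_Y/(M_Y\cap J_{X-Y})$; in particular $\mathcal M_{X,Y}$ is a submodule of $\mathcal P_n/J_{X-Y}$. *)

(* Defs.v *)
From HB Require Import structures.
From mathcomp Require Import all_boot all_order all_algebra.
Set Implicit Arguments.
Unset Strict Implicit.
Unset Printing Implicit Defensive.
Import GRing.Theory.
Local Open Scope ring_scope.

Section PartitionAlgebra.
Variable n : nat.

(* Nodes: (false, i) is the left node -(i+1), (true, i) the right node i+1. *)
Definition node := (bool * 'I_n)%type.

Definition diagram := {P : {set {set node}} | partition P [set: node]}.

Definition same_block (d : {set {set node}}) (a b : node) : bool :=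
  [exists B in d, (a \in B) && (b \in B)].

(* Stacking d1 on top of d2: nodes of the three layers.
   inl a = an outer node (left nodes of d1 / right nodes of d2),
   inr i = the i-th middle node (right of d1 = left of d2). *)
Definition mnode := (node + 'I_n)%type.
Definition emb1 (a : node) : mnode := if a.1 then inr a.2 else inl a.
Definition emb2 (a : node) : mnode := if a.1 then inl a else inr a.2.
Definition is_mid (u : mnode) : bool := if u is inr _ then true else false.

Definition comp_edge (d1 d2 : diagram) : rel mnode := fun u v =>
  [exists a, exists b, [&& u == emb1 a, v == emb1 b & same_block (val d1) a b]]
  || [exists a, exists b, [&& u == emb2 a, v == emb2 b & same_block (val d2) a b]].

Definition conn (d1 d2 : diagram) : rel mnode := connect (comp_edge d1 d2).

Definition comp_set (d1 d2 : diagram) : {set {set node}} :=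
  equivalence_partition (fun a b => conn d1 d2 (inl a) (inl b)) [set: node].

(* comp_set is always a partition; insubd only serves to land in the subtype *)
Definition comp (d1 d2 : diagram) : diagram := insubd d1 (comp_set d1 d2).

Definition nmid (d1 d2 : diagram) : nat :=
  #|[set B in equivalence_partition (conn d1 d2) [set: mnode]
       | B \subset [set u | is_mid u]]|.

Variable R : comPzRingType.
Variable delta : R.

(* P_n as an R-module: the free R-module on diagrams *)
Local Notation Pn := {ffun diagram -> R}.

Definition scl (r : R) (m : Pn) : Pn := [ffun d => r * m d].

Definition dact (d : diagram) (m : Pn) : Pn :=
  [ffun d' => \sum_(d2 | comp d d2 == d') delta ^+ (nmid d d2) * m d2].

Definition is_perm_diagram (d : diagram) : bool :=
  [forall B in val d, exists i, exists j, B == [set (false, i); (true, j)]].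

(* the trivial right module 1 : diagrams act by eps *)
Definition eps (d : diagram) : R := if is_perm_diagram d then 1 else 0.

(* the R-span of the diagrams satisfying p *)
Definition dspan (p : pred diagram) (m : Pn) : Prop :=
  forall d, m d != 0 -> p d.

(* 1 (x)_{P_n} (N / L) = 0, for left submodules L <= N of P_n, i.e.
   N = span{ d*m - eps(d) m : d diagram, m in N } + L. *)
Definition triv_tensor_vanishes (N L : Pn -> Prop) : Prop :=
  forall m, N m ->
    exists s : seq (diagram * Pn),
      (forall x, x \in s -> N x.2) /\
      exists j, L j /\
        m = \sum_(x <- s) (dact x.1 x.2 - scl (eps x.1) x.2) + j.

Definition left_submodule (C : Pn -> Prop) : Prop :=
  C 0 /\ (forall u v, C u -> C v -> C (u + v)) /\
  (forall (r : R) v, C v -> C (scl r v)) /\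
  (forall d v, C v -> C (dact d v)).

(* The image (N + L)/L of N in P_n / L is a direct summand of the left
   P_n-module P_n / L: by the correspondence theorem, there is a left
   submodule C of P_n with L <= C, N + C = P_n and N cap C <= L
   (so (N+L)/L (+) C/L = P_n/L). *)
Definition quot_direct_summand (N L : Pn -> Prop) : Prop :=
  exists C : Pn -> Prop,
    left_submodule C /\ (forall v, L v -> C v) /\
    (forall v, exists a c, N a /\ C c /\ v = a + c) /\
    (forall v, N v -> C v -> L v).
End PartitionAlgebra.

Arguments dspan {n R}.

Definition pJ {n} (Z : {set 'I_n}) : pred (diagram n) := fun d =>
  [exists z in Z, [set ((true, z) : node n)] \in val d]
  || [exists z1 in Z, exists z2 in Z,
        (z1 != z2) && same_block (val d) (true, z1) (true, z2)].

Definition pA {n} (x : 'I_n) : pred (diagram n) := fun d =>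
  [set ((true, x) : node n)] \in val d.

Definition pB {n} (X : {set 'I_n}) (x : 'I_n) : pred (diagram n) := fun d =>
  [exists y in X, (y != x) && same_block (val d) (true, x) (true, y)].

Definition pM {n} (Y : {set 'I_n}) : pred (diagram n) := fun d =>
  [forall y1 in Y, forall y2 in Y, same_block (val d) (true, y1) (true, y2)].

(* Main.v *)
Require Import Defs.
From mathcomp Require Import all_boot all_order all_algebra.
Set Implicit Arguments. Unset Strict Implicit. Unset Printing Implicit Defensive.

Section Part.
Variable n : nat.
Local Notation T := (node n).
Implicit Types (P : {set {set T}}).

Lemma sbP P (hP : partition P [set: T]) a b :
  same_block P a b = (b \in pblock P a).
Proof.
have /and3P[/eqP cov ti _] := hP.
apply/existsP/idP.
  case=> B /andP[PB /andP[aB bB]]. by rewrite (def_pblock ti PB aB).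
move=> bP; exists (pblock P a); rewrite bP pblock_mem ?mem_pblock ?cov ?inE //.
Qed.

Lemma sb_refl P (hP : partition P [set: T]) a : same_block P a a.
Proof. have /and3P[/eqP cov ti _] := hP. by rewrite sbP // mem_pblock cov inE. Qed.

Lemma sb_sym P a b : same_block P a b = same_block P b a.
Proof. apply/existsP/existsP => -[B /andP[PB /andP[h1 h2]]]; exists B; by rewrite PB h1 h2. Qed.

Lemma sb_trans P (hP : partition P [set: T]) a b c :
  same_block P a b -> same_block P b c -> same_block P a c.
Proof.
have /and3P[/eqP cov ti _] := hP.
rewrite !sbP // => h1 h2. by rewrite (same_pblock ti h1) in h2.
Qed.

Lemma sb_single P (hP : partition P [set: T]) a :
  ([set a] \in P) = [forall b, same_block P a b ==> (b == a)].
Proof.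
have /and3P[/eqP cov ti _] := hP.
apply/idP/forallP.
  move=> Pa b; apply/implyP; rewrite sbP // (def_pblock ti Pa) ?inE //.
move=> h.
have -> : [set a] = pblock P a.
  apply/setP => b; rewrite inE; apply/eqP/idP => [->|].
    by rewrite mem_pblock cov inE.
  by move=> bP; apply/eqP; move: (h b); rewrite sbP // bP.
by rewrite pblock_mem // cov inE.
Qed.

Lemma part_ext P Q (hP : partition P [set: T]) (hQ : partition Q [set: T]) :
  (forall a b, same_block P a b = same_block Q a b) -> P = Q.
Proof.
move=> h.
rewrite -(equivalence_partition_pblock hP) -(equivalence_partition_pblock hQ).
apply: eq_imset => x; apply/setP => y; rewrite !inE -!sbP //; exact: h.
Qed.

Lemma ep_part (r : rel T) : (forall x, r x x) -> (forall x y, r x y -> r y x) ->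
  (forall x y z, r x y -> r y z -> r x z) ->
  partition (equivalence_partition r [set: T]) [set: T].
Proof.
move=> rr rs rt; apply: equivalence_partitionP => x y z _ _ _; split; first exact: rr.
move=> rxy; apply/idP/idP => [rxz|ryz]; [exact: rt (rs _ _ rxy) rxz | exact: rt rxy ryz].
Qed.

Lemma ep_sb (r : rel T) (rr : forall x, r x x) (rs : forall x y, r x y -> r y x)
  (rt : forall x y z, r x y -> r y z -> r x z) a b :
  same_block (equivalence_partition r [set: T]) a b = r a b.
Proof.
rewrite sbP; last exact: ep_part.
apply: pblock_equivalence_partition; rewrite ?inE //.
move=> x y z _ _ _; split; first exact: rr.
move=> rxy; apply/idP/idP => [rxz|ryz]; [exact: rt (rs _ _ rxy) rxz | exact: rt rxy ryz].
Qed.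

End Part.
Section Gen.
Variable T : finType.
Lemma connE (e Q : rel T) : (forall x, Q x x) -> (forall x y z, Q x y -> Q y z -> Q x z) ->
  (forall u v, e u v -> Q u v) -> (forall u v, Q u v -> connect e u v) ->
  connect e =2 Q.
Proof.
move=> Qr Qt eQ Qe u v; apply/idP/idP; last exact: Qe.
case/connectP => p pth ->{v}; elim: p u pth => [|w p IH] u /=; first by rewrite Qr.
by case/andP => euw pw; apply: Qt (eQ _ _ euw) (IH _ pw).
Qed.

Lemma connect_isol (e : rel T) u : (forall v, e u v -> v = u) -> forall v, connect e u v -> v = u.
Proof.
move=> h v /connectP[p pth ->{v}]; elim: p pth => [|w p IH] //= /andP[euw pw].
by move: (h _ euw) pw => ->; exact: IH.
Qed.
End Gen.

Section Diag.
Variable n : nat.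
Implicit Types (d : diagram n) (a b : node n).

Lemma dpart d : partition (val d) [set: node n]. Proof. exact: valP d. Qed.

Lemma diag_ext d1 d2 : (forall a b, same_block (val d1) a b = same_block (val d2) a b) -> d1 = d2.
Proof. move=> h; apply: val_inj; apply: part_ext h; exact: dpart. Qed.

Lemma comp_edge_sym d1 d2 : symmetric (comp_edge d1 d2).
Proof.
move=> u v; rewrite /comp_edge; congr (_ || _);
apply/existsP/existsP => -[a /existsP[b /and3P[h1 h2 h3]]]; exists b; apply/existsP;
exists a; by rewrite h1 h2 sb_sym h3.
Qed.

Lemma conn_refl d1 d2 u : conn d1 d2 u u. Proof. exact: connect0. Qed.
Lemma conn_sym d1 d2 u v : conn d1 d2 u v = conn d1 d2 v u.
Proof. by apply: sym_connect_sym; exact: comp_edge_sym. Qed.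
Lemma conn_trans d1 d2 u v w : conn d1 d2 u v -> conn d1 d2 v w -> conn d1 d2 u w.
Proof. exact: connect_trans. Qed.

Lemma comp_set_part d1 d2 : partition (comp_set d1 d2) [set: node n].
Proof.
apply: ep_part => [x|x y|x y z]; [exact: conn_refl| by rewrite conn_sym| exact: conn_trans].
Qed.

Lemma comp_val d1 d2 : val (Defs.comp d1 d2) = comp_set d1 d2.
Proof. by rewrite /Defs.comp insubdK //; exact: comp_set_part. Qed.

Lemma comp_sb d1 d2 a b : same_block (val (Defs.comp d1 d2)) a b = conn d1 d2 (inl a) (inl b).
Proof.
rewrite comp_val /comp_set ep_sb // => [x|x y|x y z]; [exact: conn_refl| by rewrite conn_sym| exact: conn_trans].
Qed.

Lemma nmid0 d1 d2 : (forall i : 'I_n, exists a, conn d1 d2 (inr i) (inl a)) -> nmid d1 d2 = 0%N.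
Proof.
move=> h; apply/eqP; rewrite cards_eq0; apply/eqP/setP => B; rewrite !inE.
apply/negbTE/negP => /andP[/imsetP[x _ ->] /subsetP sub].
have [w cw nw] : exists2 w, conn d1 d2 x w & ~~ is_mid w.
  case: x {sub} => [a|i]; first by exists (inl a) => //; exact: conn_refl.
  by case: (h i) => a ca; exists (inl a).
by move: (sub w); rewrite !inE cw => /(_ isT); rewrite (negbTE nw).
Qed.

Definition krel (K : eqType) (k : node n -> K) : rel (node n) := fun a b => k a == k b.
Lemma kpart (K : eqType) (k : node n -> K) :
  partition (equivalence_partition (krel k) [set: node n]) [set: node n].
Proof. by apply: ep_part => [x|x y|x y z] /=; rewrite /krel // => /eqP-> //; rewrite eq_sym. Qed.
Definition kdiag (K : eqType) (k : node n -> K) : diagram n := exist (fun P => partition P [set: node n]) _ (kpart k).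
Lemma kdiag_sb (K : eqType) (k : node n -> K) a b : same_block (val (kdiag k)) a b = (k a == k b).
Proof. by rewrite /= ep_sb //= /krel => [x|x y|x y z] // => /eqP-> //; rewrite eq_sym. Qed.

Lemma single_sb d a : ([set a] \in val d) = [forall b, same_block (val d) a b ==> (b == a)].
Proof. exact: sb_single (dpart d) a. Qed.

Lemma sbr d a : same_block (val d) a a. Proof. exact: sb_refl (dpart d) a. Qed.
Lemma sbt d a b c : same_block (val d) a b -> same_block (val d) b c -> same_block (val d) a c.
Proof. move=> h1 h2; exact: sb_trans (dpart d) _ _ _ h1 h2. Qed.

End Diag.

Section Edges.
Variable n : nat.
Implicit Types (d : diagram n) (a b : node n).

Lemma e1edge d1 d2 a b : same_block (val d1) a b -> conn d1 d2 (emb1 a) (emb1 b).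
Proof.
move=> h; apply: connect1; apply/orP; left; apply/existsP; exists a; apply/existsP; exists b.
by rewrite !eqxx h.
Qed.

Lemma e2edge d1 d2 a b : same_block (val d2) a b -> conn d1 d2 (emb2 a) (emb2 b).
Proof.
move=> h; apply: connect1; apply/orP; right; apply/existsP; exists a; apply/existsP; exists b.
by rewrite !eqxx h.
Qed.

Lemma edge_cases d1 d2 (P : mnode n -> mnode n -> Prop) u v :
  (forall a b, same_block (val d1) a b -> P (emb1 a) (emb1 b)) ->
  (forall a b, same_block (val d2) a b -> P (emb2 a) (emb2 b)) ->
  comp_edge d1 d2 u v -> P u v.
Proof.
move=> h1 h2; case/orP => /existsP[a /existsP[b /and3P[/eqP-> /eqP-> h]]]; [exact: h1|exact: h2].
Qed.

Definition fm (u : mnode n) : node n := match u with inl a => a | inr i => (true, i) end.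
Lemma fm_emb1 a : fm (emb1 a) = a. Proof. by case: a => [[] i]. Qed.
Lemma fm_emb2 a : fm (emb2 a) = (true, a.2). Proof. by case: a => [[] i]. Qed.

Lemma to_emb1 d1 d2 u : (forall j, same_block (val d2) (true, j) (false, j)) ->
  conn d1 d2 u (emb1 (fm u)).
Proof.
move=> h; case: u => [[[] j]|i] /=; try exact: conn_refl.
exact: (e2edge d1 (h j)).
Qed.

End Edges.

Section Merge.
Variable n : nat.
Variables (S : {set 'I_n}) (s0 : 'I_n).
Hypothesis Hs0 : s0 \in S.
Implicit Types (d : diagram n) (a b : node n).

Definition mkey (a : node n) : 'I_n := if a.2 \in S then s0 else a.2.
Definition mergeD := kdiag mkey.

Lemma mergeD_sb a b : same_block (val mergeD) a b = (a.2 == b.2) || ((a.2 \in S) && (b.2 \in S)).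
Proof.
rewrite kdiag_sb /mkey; case: ifP => ha; case: ifP => hb /=; rewrite ?orbT ?orbF //.
- by rewrite eqxx.
- have -> : (s0 == b.2) = false by apply/negbTE; apply: contraFN hb => /eqP <-.
  have -> // : (a.2 == b.2) = false by apply/negbTE; apply: contraFN hb => /eqP <-.
- have -> : (a.2 == s0) = false by apply/negbTE; apply: contraFN ha => /eqP ->.
  have -> // : (a.2 == b.2) = false by apply/negbTE; apply: contraFN ha => /eqP ->.
Qed.

Definition touch d a := [exists s in S, same_block (val d) a (true, s)].
Definition Qm d (u v : mnode n) :=
  same_block (val d) (fm u) (fm v) || (touch d (fm u) && touch d (fm v)).

Lemma touch_sb d a b : same_block (val d) a b -> touch d b -> touch d a.
Proof. move=> h /exists_inP[s sS hs]; apply/exists_inP; exists s => //; exact: sbt h hs. Qed.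

Lemma merge_conn d : conn d mergeD =2 Qm d.
Proof.
apply: connE.
- by move=> u; rewrite /Qm sbr.
- move=> u v w; rewrite /Qm => /orP[h1|/andP[t1 t2]] /orP[h2|/andP[t3 t4]].
  + by rewrite (sbt h1 h2).
  + by rewrite (touch_sb h1 t3) t4 orbT.
  + by rewrite t1 (touch_sb _ t2) ?orbT // sb_sym.
  + by rewrite t1 t4 orbT.
- move=> u v; apply: (@edge_cases _ d mergeD (Qm d)) => a b h; rewrite /Qm.
    by rewrite !fm_emb1 h.
  rewrite !fm_emb2; move: h; rewrite mergeD_sb => /orP[/eqP->|/andP[ha hb]]; first by rewrite sbr.
  by rewrite /touch; apply/orP; right; apply/andP; split; apply/exists_inP;
    [exists a.2 | exists b.2]; rewrite // sbr.
- have hj j : same_block (val mergeD) (true, j) (false, j) by rewrite mergeD_sb eqxx.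
  move=> u v /orP[h|/andP[/exists_inP[s sS hs] /exists_inP[s' sS' hs']]].
    apply: conn_trans (to_emb1 d u hj) _; rewrite conn_sym.
    apply: conn_trans (to_emb1 d v hj) _; apply: e1edge; by rewrite sb_sym.
  apply: conn_trans (to_emb1 d u hj) _; apply: conn_trans (e1edge _ hs) _.
  rewrite conn_sym; apply: conn_trans (to_emb1 d v hj) _; apply: conn_trans (e1edge _ hs') _.
  have := @e2edge _ d mergeD (false, s') (false, s); rewrite mergeD_sb sS sS' orbT; by apply.
Qed.

Lemma merge_sb d a b :
  same_block (val (Defs.comp d mergeD)) a b = same_block (val d) a b || (touch d a && touch d b).
Proof. by rewrite comp_sb merge_conn. Qed.

Lemma merge_nmid d : nmid d mergeD = 0%N.
Proof. apply: nmid0 => i; exists (true, i); by rewrite merge_conn /Qm /= sbr. Qed.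

Lemma merge_id d : pM S d -> Defs.comp d mergeD = d.
Proof.
move/forall_inP => hM; apply: diag_ext => a b; rewrite merge_sb.
apply/orP/idP => [[//|/andP[/exists_inP[s sS hs] /exists_inP[s' sS' hs']]]|->]; last by left.
apply: sbt hs _; rewrite sb_sym; apply: sbt hs' _.
by move: (hM s' sS') => /forall_inP /(_ s sS).
Qed.

Lemma merge_pM d : pM S (Defs.comp d mergeD).
Proof.
apply/forall_inP => y1 h1; apply/forall_inP => y2 h2; rewrite merge_sb; apply/orP; right.
by apply/andP; split; apply/exists_inP; [exists y1|exists y2]; rewrite // sbr.
Qed.

Lemma mergeD_pM : pM S mergeD.
Proof.
apply/forall_inP => y1 h1; apply/forall_inP => y2 h2; by rewrite mergeD_sb /= h1 h2 orbT.
Qed.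

End Merge.

Section Single.
Variable n : nat.
Variables (x y : 'I_n).
Hypothesis xy : x != y.
Implicit Types (d : diagram n) (a b : node n).

Definition sig1 (i : 'I_n) := if i == x then y else i.
Lemma sig1_neq i : sig1 i != x.
Proof. rewrite /sig1; case: ifP => [_|/negbT //]; by rewrite eq_sym. Qed.

Definition k1 (a : node n) : option 'I_n := if a == (true, x) then None else Some (sig1 a.2).
Definition D1 := kdiag k1.
Definition f1 (u : mnode n) : node n := match u with inl a => a | inr i => (true, sig1 i) end.
Definition Q1 d (u v : mnode n) := same_block (val d) (f1 u) (f1 v).

Lemma f1_emb1 a : a != (true, x) -> f1 (emb1 a) = a.
Proof. case: a => [[] i] //= h; rewrite /sig1; case: eqP => // e; by rewrite e eqxx in h. Qed.
Lemma f1_emb2 a : a != (true, x) -> f1 (emb2 a) = (true, sig1 a.2).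
Proof. case: a => [[] i] //= h; rewrite /sig1; case: eqP => // e; by rewrite e eqxx in h. Qed.

Lemma D1_pA : pA x D1.
Proof.
rewrite /pA single_sb; apply/forallP => b; apply/implyP; rewrite kdiag_sb /k1 eqxx.
by case: ifP.
Qed.

Section WithD.
Variable d : diagram n.
Hypothesis hd : pA x d.

Lemma sx b : same_block (val d) (true, x) b -> b = (true, x).
Proof. by move: hd; rewrite /pA single_sb => /forallP /(_ b) /implyP h /h /eqP. Qed.

Lemma single_conn : conn d D1 =2 Q1 d.
Proof.
apply: connE.
- by move=> u; rewrite /Q1 sbr.
- by move=> u v w; rewrite /Q1; exact: sbt.
- move=> u v; apply: (@edge_cases _ d D1 (Q1 d)) => a b h; rewrite /Q1.
    have [ea|na] := eqVneq a (true, x).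
      by move: h; rewrite ea => /sx ->; rewrite sbr.
    have [eb|nb] := eqVneq b (true, x).
      by move: h; rewrite eb sb_sym => /sx e; rewrite e eqxx in na.
    by rewrite !f1_emb1.
  move: h; rewrite kdiag_sb /k1.
  have [ea|na] := eqVneq a (true, x).
    by rewrite ea; case: ifP => // /eqP -> _; rewrite sbr.
  have [eb|nb] := eqVneq b (true, x) => // /eqP [e].
  by rewrite !f1_emb2 // e sbr.
- have hu u : u != inl (true, x) -> conn d D1 u (emb1 (f1 u)).
    case: u => [[[] j]|i] /= hu.
    + have nj : j != x by apply: contraNneq hu => ->.
      have := @e2edge _ d D1 (true, j) (false, j); rewrite kdiag_sb /k1 /=.
      by rewrite xpair_eqE /= (negbTE nj) eqxx; apply.
    + exact: conn_refl.
    + rewrite /sig1; case: eqP => [->|_]; last exact: conn_refl.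
      have := @e2edge _ d D1 (false, x) (false, y); rewrite kdiag_sb /k1 /= /sig1 eqxx.
      by rewrite if_same eqxx; apply.
  have fx v : f1 v = (true, x) -> v = inl (true, x).
    case: v => [a|i] /= e; first by rewrite e.
    by case: e => e; move: (sig1_neq i); rewrite e eqxx.
  move=> u v; rewrite /Q1 => h.
  have [eu|nu] := eqVneq u (inl (true, x)).
    by move: h; rewrite eu /= => /sx /fx ->; exact: conn_refl.
  have [ev|nv] := eqVneq v (inl (true, x)).
    by move: h; rewrite ev /= sb_sym => /sx /fx e; rewrite e eqxx in nu.
  apply: conn_trans (hu _ nu) _; rewrite conn_sym; apply: conn_trans (hu _ nv) _.
  by apply: e1edge; rewrite sb_sym.
Qed.

Lemma single_id : Defs.comp d D1 = d.
Proof. by apply: diag_ext => a b; rewrite comp_sb single_conn. Qed.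

Lemma single_nmid : nmid d D1 = 0%N.
Proof. apply: nmid0 => i; exists (true, sig1 i); by rewrite single_conn /Q1 /= sbr. Qed.
End WithD.
End Single.

Section Alg.
Variable n : nat.
Variable R : comPzRingType.
Variable delta : R.
Local Open Scope ring_scope.
Import GRing.Theory.
Implicit Types (d e : diagram n).

Definition ind e : {ffun diagram n -> R} := [ffun d => (d == e)%:R].

Lemma dact_ind d e c :
  dact delta d (scl c (ind e)) = scl (c * delta ^+ nmid d e) (ind (Defs.comp d e)).
Proof.
apply/ffunP => d'; rewrite /dact /scl /ind ffunE [RHS]ffunE [in RHS]ffunE.
under eq_bigr do rewrite !ffunE.
rewrite big_mkcond (bigD1 e) //= big1 => [|d2 ne]; last first.
  by rewrite (negbTE ne) mulr0 mulr0 if_same.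
rewrite eqxx mulr1 addr0 eq_sym; case: ifP => _; last by rewrite mulr0.
by rewrite mulr1 mulrC.
Qed.

Lemma scl0 (v : {ffun diagram n -> R}) : scl (0 : R) v = 0.
Proof. by apply/ffunP => d; rewrite !ffunE mul0r. Qed.

Lemma tv_gen (p : pred (diagram n)) (L : {ffun diagram n -> R} -> Prop) (g : diagram n -> diagram n) :
  L 0 ->
  (forall d, p d -> [/\ Defs.comp d (g d) = d, nmid d (g d) = 0%N, p (g d) & eps R d = 0]) ->
  triv_tensor_vanishes delta (dspan p) L.
Proof.
move=> L0 h m hm.
exists [seq (d, scl (m d) (ind (g d))) | d <- enum p]; split.
  move=> z /mapP[d]; rewrite mem_enum => pd -> d' /=; rewrite !ffunE.
  case: (d' =P g d) => [->|_]; first by case: (h d pd).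
  by rewrite mulr0 eqxx.
exists 0; split => //; rewrite addr0 big_map.
rewrite (eq_big_seq (fun d => scl (m d) (ind d))) => [|d]; last first.
  rewrite mem_enum => pd /=; case: (h d pd) => e1 e2 _ e4.
  by rewrite dact_ind e1 e2 e4 scl0 subr0 expr0 mulr1.
apply/ffunP => d'; rewrite sum_ffunE big_enum /=.
under eq_bigr do rewrite !ffunE.
case pd': (p d').
  rewrite (bigD1 d') //= eqxx mulr1 big1 ?addr0 // => d2 /andP[_ ne].
  by rewrite eq_sym (negbTE ne) mulr0.
rewrite big1 => [|d2 pd2]; last first.
  case: eqP => [e|_]; last by rewrite mulr0.
  by move: pd2; rewrite -e ?inE ?unfold_in pd'.
by apply/eqP; apply: contraFT pd' => /hm.
Qed.

Lemma sum_reidx (f g : diagram n -> diagram n) (F : diagram n -> R) d' :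
  \sum_(d | f d == d') \sum_(d2 | g d2 == d) F d2 = \sum_(d2 | f (g d2) == d') F d2.
Proof.
rewrite [RHS](partition_big g (fun d => f d == d')) //.
apply: eq_bigr => d /eqP fd; apply: eq_bigl => d2.
by apply/idP/andP => [/eqP gd|[_ //]]; rewrite gd fd eqxx.
Qed.

End Alg.

Section Perm.
Variable n : nat.
Implicit Types (d : diagram n).

Lemma not_perm_single d z : [set (true, z)] \in val d -> ~~ is_perm_diagram d.
Proof.
move=> hz; apply/negP => /forall_inP /(_ _ hz) /existsP[i /existsP[j /eqP e]].
have : (false, i) \in [set (true, z)] by rewrite e !inE eqxx.
by rewrite inE.
Qed.

Lemma not_perm_two d z1 z2 : z1 != z2 -> same_block (val d) (true, z1) (true, z2) -> ~~ is_perm_diagram d.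
Proof.
move=> ne /existsP[B /andP[hB /andP[h1 h2]]].
apply/negP => /forall_inP /(_ _ hB) /existsP[i /existsP[j /eqP e]].
move: h1 h2; rewrite e !inE /= => /eqP [e1] /eqP [e2].
by rewrite e1 e2 eqxx in ne.
Qed.

Lemma eps0 (R : comPzRingType) d : ~~ is_perm_diagram d -> eps R d = 0%R.
Proof. by rewrite /eps => /negbTE ->. Qed.
End Perm.

Section Sum.
Variable n : nat.
Variables (Y Z : {set 'I_n}) (s0 : 'I_n).
Hypothesis Hs0 : s0 \in Y.
Hypothesis ZY : [disjoint Z & Y].
Implicit Types (d : diagram n) (a b : node n).

Local Notation M := (mergeD Y s0).
Definition mu d := Defs.comp d M.

Lemma J_ideal d0 d2 : pJ Z d2 -> pJ Z (Defs.comp d0 d2).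
Proof.
case/orP => [/exists_inP[z zZ hz]|/exists_inP[z1 z1Z /exists_inP[z2 z2Z /andP[ne hs]]]].
  apply/orP; left; apply/exists_inP; exists z => //.
  rewrite single_sb; apply/forallP => b; apply/implyP; rewrite comp_sb => hc.
  suff : inl b = inl (true, z) :> mnode n by case=> ->.
  apply: connect_isol hc => v hv.
  have P := @edge_cases _ d0 d2 (fun u v => u = inl (true, z) -> v = u) (inl (true, z)) v.
  apply: (P _ _ hv erefl) => a b0 h.
    by case: a h => [[] i] h /= [].
  case: a h => [[] i] h //= [ei]; subst i.
  by move: hz; rewrite single_sb => /forallP /(_ b0) /implyP /(_ h) /eqP ->.
apply/orP; right; apply/exists_inP; exists z1 => //; apply/exists_inP; exists z2 => //.
by rewrite ne comp_sb (e2edge d0 hs).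
Qed.

Lemma notY z : z \in Z -> z \notin Y.
Proof. by move=> zZ; rewrite (disjointFr ZY zZ). Qed.

Lemma mu_J d : pJ Z d -> pJ Z (mu d).
Proof.
case/orP => [/exists_inP[z zZ hz]|/exists_inP[z1 z1Z /exists_inP[z2 z2Z /andP[ne hs]]]].
  apply/orP; left; apply/exists_inP; exists z => //.
  have sz b : same_block (val d) (true, z) b -> b = (true, z).
    by move: hz; rewrite single_sb => /forallP /(_ b) /implyP h /h /eqP.
  rewrite single_sb; apply/forallP => b; apply/implyP; rewrite /mu merge_sb //.
  case/orP => [/sz -> //|/andP[/exists_inP[s sY /sz [e]] _]].
  by move: (notY zZ); rewrite -e sY.
apply/orP; right; apply/exists_inP; exists z1 => //; apply/exists_inP; exists z2 => //.
by rewrite ne /mu merge_sb // hs.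
Qed.

Lemma mu_id d : pM Y d -> mu d = d.
Proof. exact: merge_id. Qed.
Lemma mu_pM d : pM Y (mu d).
Proof. exact: merge_pM. Qed.
Lemma mu_mu d : mu (mu d) = mu d.
Proof. exact: mu_id (mu_pM d). Qed.

Section Compat.
Variables d0 d2 : diagram n.
Local Notation conn1 := (conn d0 d2).
Definition Tm (u : mnode n) := [exists s in Y, conn1 u (inl (true, s))].
Definition Qc (u v : mnode n) := conn1 u v || (Tm u && Tm v).

Lemma Tm_conn u v : conn1 u v -> Tm v -> Tm u.
Proof. move=> h /exists_inP[s sY hs]; apply/exists_inP; exists s => //; exact: conn_trans h hs. Qed.

Lemma conn_mu : conn d0 (mu d2) =2 Qc.
Proof.
apply: connE.
- by move=> u; rewrite /Qc conn_refl.
- move=> u v w; rewrite /Qc => /orP[h1|/andP[t1 t2]] /orP[h2|/andP[t3 t4]].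
  + by rewrite (conn_trans h1 h2).
  + by rewrite (Tm_conn h1 t3) t4 orbT.
  + by rewrite t1 (Tm_conn _ t2) ?orbT // conn_sym.
  + by rewrite t1 t4 orbT.
- move=> u v; apply: (@edge_cases _ d0 (mu d2) Qc) => a b h; rewrite /Qc.
    by rewrite (e1edge d2 h).
  move: h; rewrite /mu merge_sb // => /orP[h|/andP[/exists_inP[s sS hs] /exists_inP[s' sS' hs']]].
    by rewrite (e2edge d0 h).
  apply/orP; right; apply/andP; split; apply/exists_inP; [exists s|exists s'] => //.
    exact: (e2edge d0 hs).
  exact: (e2edge d0 hs').
- have sub u v : conn1 u v -> conn d0 (mu d2) u v.
    apply: connect_sub => u' v'; apply: (@edge_cases _ d0 d2 (fun u v => conn d0 (mu d2) u v)) => a b h.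
      exact: e1edge.
    by apply: e2edge; rewrite /mu merge_sb // h.
  move=> u v /orP[/sub //|/andP[/exists_inP[s sS hs] /exists_inP[s' sS' hs']]].
  apply: conn_trans (sub _ _ hs) _; rewrite conn_sym; apply: conn_trans (sub _ _ hs') _.
  have := @e2edge _ d0 (mu d2) (true, s') (true, s); rewrite /mu merge_sb //.
  apply; apply/orP; right; apply/andP; split; apply/exists_inP; [exists s'|exists s] => //; exact: sbr.
Qed.

Lemma comp_mu : Defs.comp d0 (mu d2) = mu (Defs.comp d0 d2).
Proof.
apply: diag_ext => a b; rewrite comp_sb conn_mu /mu merge_sb // /Qc -comp_sb.
congr (_ || (_ && _)); apply: eq_existsb => s; by rewrite comp_sb.
Qed.

End Compat.
End Sum.

Section NmidMu.
Variable n : nat.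
Variables (Y : {set 'I_n}) (s0 : 'I_n).
Hypothesis Hs0 : s0 \in Y.
Variables d0 d2 : diagram n.
Local Notation conn1 := (conn d0 d2).
Local Notation mu := (mu Y s0).
Local Notation Tm := (Tm Y d0 d2).

Lemma nmid_mu : nmid d0 (mu d2) = nmid d0 d2.
Proof.
rewrite /nmid; apply: eq_card => B.
have key (x : mnode n) : ~~ Tm x -> [set y in [set: mnode n] | conn d0 (mu d2) x y] = [set y in [set: mnode n] | conn1 x y].
  move=> nT; apply/setP => y; rewrite !in_set (conn_mu Hs0) /Qc (negbTE nT) orbF.
  done.
have bad (x : mnode n) : Tm x -> forall (r : rel (mnode n)), (forall y, conn1 x y -> r x y) ->
    ~~ ([set y in [set: mnode n] | r x y] \subset [set u | is_mid u]).
  move=> /exists_inP[s sY hs] r hr; apply/negP => /subsetP /(_ (inl (true, s))).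
  by rewrite !in_set (hr _ hs) => /(_ isT).
apply/setIdP/setIdP => -[/imsetP[x _ ->] hsub].
  case Tx: (Tm x).
    have h2 : forall y, conn1 x y -> conn d0 (mu d2) x y by move=> y h; rewrite (conn_mu Hs0) /Qc h.
    by move: (bad x Tx _ h2); rewrite hsub.
  by rewrite key ?Tx // in hsub *; split => //; apply: imset_f.
case Tx: (Tm x).
  by move: (bad x Tx conn1 (fun y h => h)); rewrite hsub.
by rewrite -key ?Tx // in hsub *; split => //; apply: imset_f.
Qed.
End NmidMu.

Section Summand.
Variable n : nat.
Variable R : comPzRingType.
Variable delta : R.
Local Open Scope ring_scope.
Import GRing.Theory.
Variables (Y Z : {set 'I_n}) (s0 : 'I_n).
Hypothesis Hs0 : s0 \in Y.
Hypothesis ZY : [disjoint Z & Y].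
Local Notation mu := (mu Y s0).
Local Notation Pn := {ffun diagram n -> R}.
Implicit Types (u v : Pn) (p : pred (diagram n)).

Lemma sum_nz (P : pred (diagram n)) (F : diagram n -> R) :
  \sum_(i | P i) F i != 0 -> exists2 i, P i & F i != 0.
Proof.
move=> h; case: (pickP (fun i => P i && (F i != 0))) => [i /andP[]|none]; first by exists i.
rewrite big1 ?eqxx // in h => i Pi; move: (none i); rewrite Pi /= => /negbFE/eqP //.
Qed.

Lemma dspan0 p : dspan p (0 : Pn).
Proof. by move=> d; rewrite ffunE eqxx. Qed.

Lemma dspan_add p u v : dspan p u -> dspan p v -> dspan p (u + v).
Proof.
move=> hu hv d; rewrite ffunE; have [u0|/hu //] := eqVneq (u d) 0.
by rewrite u0 add0r => /hv.
Qed.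

Lemma dspan_scl p r v : dspan p v -> dspan p (scl r v).
Proof.
move=> hv d; rewrite /scl ffunE; have [v0|/hv //] := eqVneq (v d) 0.
by rewrite v0 mulr0 eqxx.
Qed.

Lemma dspan_dactJ d0 v : dspan (pJ Z) v -> dspan (pJ Z) (dact delta d0 v).
Proof.
move=> hv d'; rewrite /dact ffunE => /sum_nz [d2 /eqP <- h].
apply: J_ideal; apply: hv; apply: contraNneq h => ->; by rewrite mulr0.
Qed.

Definition pi v : Pn := [ffun d' => \sum_(d | mu d == d') v d].

Lemma pi_supp v d' : pi v d' != 0 -> exists2 d, mu d = d' & v d != 0.
Proof. by rewrite /pi ffunE => /sum_nz [d /eqP e h]; exists d. Qed.

Lemma pi0 : pi 0 = 0.
Proof. apply/ffunP => d'; rewrite /pi !ffunE big1 // => d _; by rewrite ffunE. Qed.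

Lemma piD u v : pi (u + v) = pi u + pi v.
Proof.
apply/ffunP => d'; rewrite /pi ffunE [in RHS]ffunE [X in _ = X + _]ffunE [X in _ = _ + X]ffunE.
rewrite -big_split /=; apply: eq_bigr => d _; by rewrite ffunE.
Qed.

Lemma piB u v : pi (u - v) = pi u - pi v.
Proof.
apply/ffunP => d'; rewrite /pi; rewrite !ffunE.
rewrite -sumrB; apply: eq_bigr => d _; by rewrite !ffunE.
Qed.

Lemma pi_scl r v : pi (scl r v) = scl r (pi v).
Proof.
apply/ffunP => d'; rewrite /pi /scl ffunE [in RHS]ffunE [in RHS]ffunE mulr_sumr.
apply: eq_bigr => d _; by rewrite ffunE.
Qed.

Lemma sum_aux (c : diagram n -> R) (g : diagram n -> diagram n) (v : Pn) d3 :
  c d3 * \sum_(d | g d == d3) v d = \sum_(d2 | g d2 == d3) c (g d2) * v d2.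
Proof. rewrite mulr_sumr; apply: eq_bigr => d /eqP -> //. Qed.

Lemma pi_dact d0 v : pi (dact delta d0 v) = dact delta d0 (pi v).
Proof.
apply/ffunP => d'; rewrite /pi /dact ffunE [in RHS]ffunE.
transitivity (\sum_(d2 | mu (Defs.comp d0 d2) == d') delta ^+ nmid d0 d2 * v d2).
  under eq_bigr do rewrite ffunE.
  exact: (sum_reidx mu (Defs.comp d0) (fun d2 => delta ^+ nmid d0 d2 * v d2)).
symmetry.
transitivity (\sum_(d3 | Defs.comp d0 d3 == d') \sum_(d2 | mu d2 == d3) delta ^+ nmid d0 (mu d2) * v d2).
  apply: eq_bigr => d3 _; rewrite ffunE; exact: (sum_aux (fun d => delta ^+ nmid d0 d) mu v d3).
rewrite (sum_reidx (Defs.comp d0) mu (fun d2 => delta ^+ nmid d0 (mu d2) * v d2)).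
apply: eq_big => [d2|d2 _]; first by rewrite (comp_mu Hs0).
by rewrite (nmid_mu Hs0).
Qed.

Lemma pi_idem v : pi (pi v) = pi v.
Proof.
apply/ffunP => d'; rewrite /pi ffunE [in RHS]ffunE.
under eq_bigr do rewrite ffunE.
rewrite (sum_reidx mu mu v); apply: eq_bigl => d; by rewrite (mu_mu Hs0).
Qed.

Lemma pi_M v : dspan (pM Y) (pi v).
Proof. move=> d' /pi_supp [d e _]; rewrite -e; exact: mu_pM. Qed.

Lemma pi_L v : dspan (pJ Z) v -> dspan (pJ Z) (pi v).
Proof. move=> hv d' /pi_supp [d e /hv h]; rewrite -e; exact: mu_J. Qed.

Lemma pi_N v : dspan (pM Y) v -> pi v = v.
Proof.
move=> hv; apply/ffunP => d'; rewrite /pi ffunE.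
have hd d : mu d == d' -> v d = if d == d' then v d' else 0.
  have [-> //|ne] := eqVneq d d'; move=> /eqP md.
  apply/eqP; apply: contraNT ne => /hv /(mu_id Hs0) e; by rewrite -e md.
under eq_bigr => d md do rewrite (hd d md).
rewrite -big_mkcondr /=.
have [md'|nmd'] := eqVneq (mu d') d'.
  rewrite (big_pred1 d') // => i /=; case: (i =P d') => [->|_]; by rewrite ?md' ?eqxx ?andbF.
rewrite big_pred0 => [|i /=]; last by case: (i =P d') => [->|_]; rewrite ?andbF // (negbTE nmd').
apply/esym/eqP; apply: contraNT nmd' => /hv /(mu_id Hs0) ->; by rewrite eqxx.
Qed.

Lemma summand : quot_direct_summand delta (dspan (pM Y)) (dspan (pJ Z)).
Proof.
exists (fun v => dspan (pJ Z) (pi v)); split; [split; [|split; [|split]]|split; [|split]].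
- by rewrite pi0; exact: dspan0.
- by move=> u v hu hv; rewrite piD; exact: dspan_add.
- by move=> r v hv; rewrite pi_scl; exact: dspan_scl.
- by move=> d v hv; rewrite pi_dact; exact: dspan_dactJ.
- exact: pi_L.
- move=> v; exists (pi v), (v - pi v); split; first exact: pi_M.
  by rewrite piB pi_idem subrr; split; [exact: dspan0 | rewrite addrC subrK].
- by move=> v hN; rewrite pi_N.
Qed.
End Summand.

Theorem lemma4p5 (R : comPzRingType) (delta : R) (n : nat) :
  (* (1) *)
  (forall (X : {set 'I_n}) (x : 'I_n), x \in X -> 2 <= n ->
     triv_tensor_vanishes delta
       (dspan (pA x))
       (dspan (fun d => pA x d && pJ (X :\ x) d))) /\
  (* (2) *)
  (forall (X : {set 'I_n}) (x : 'I_n), x \in X ->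
     triv_tensor_vanishes delta
       (dspan (pB X x))
       (dspan (fun d => pB X x d && pJ (X :\ x) d))) /\
  (* (3) *)
  (forall (X Y : {set 'I_n}), Y \subset X -> 2 <= #|Y| ->
     triv_tensor_vanishes delta
       (dspan (pM Y))
       (dspan (fun d => pM Y d && pJ (X :\: Y) d)) /\
     quot_direct_summand delta
       (dspan (pM Y))
       (dspan (pJ (X :\: Y)))).
Proof.
split; [|split].
- move=> X x xX n2.
  have [y xy] : exists y : 'I_n, x != y.
    have hk : (if val x == 0%N then 1%N else 0%N) < n by case: ifP => _ //; exact: ltnW.
    exists (Ordinal hk); apply/eqP => /(congr1 val) /=.
    case: eqP => [-> //|h e]; exact: h e.
  apply: (@tv_gen _ R delta _ _ (fun _ => D1 x y)); first exact: dspan0.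
  move=> d pd; split.
  + exact: single_id.
  + exact: single_nmid.
  + exact: D1_pA.
  + by apply: eps0; apply: not_perm_single pd.
- move=> X x xX.
  pose g (d : diagram n) := if [pick y | (y \in X) && (y != x) && same_block (val d) (true, x) (true, y)]
    is Some y then mergeD [set x; y] x else d.
  apply: (@tv_gen _ R delta _ _ g); first exact: dspan0.
  move=> d pd; rewrite /g; case: pickP => [y /andP[/andP[yX ne] sb]|none]; last first.
    by case/exists_inP: pd => y yX; move: (none y); rewrite yX /= => ->.
  have xS : x \in [set x; y] by rewrite !inE eqxx.
  have yS : y \in [set x; y] by rewrite !inE eqxx orbT.
  split.
  + apply: merge_id => //; apply/forall_inP => y1; rewrite !inE => h1; apply/forall_inP => y2; rewrite !inE => h2.
    case/orP: h1 => /eqP->; case/orP: h2 => /eqP->; rewrite ?sbr // sb_sym //.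
  + exact: merge_nmid.
  + apply/exists_inP; exists y => //; rewrite ne /= mergeD_sb // xS yS orbT //.
  + by apply: eps0; apply: (not_perm_two _ sb); rewrite eq_sym.
- move=> X Y sub cY.
  have /card_gt1P [y1 [y2 [y1Y y2Y ne]]] : 1 < #|Y| by [].
  split.
    apply: (@tv_gen _ R delta _ _ (fun _ => mergeD Y y1)); first exact: dspan0.
    move=> d pd; split.
    + exact: merge_id.
    + exact: merge_nmid.
    + exact: mergeD_pM.
    + apply: eps0; apply: (not_perm_two ne).
      by move/forall_inP: pd => /(_ y1 y1Y) /forall_inP /(_ y2 y2Y).
  apply: (summand delta y1Y).
  rewrite disjoints_subset; apply/subsetP => z; rewrite !inE; by case/andP.
Qed.
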